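(* Let $\mathcal N=\mathbb N^*$, $\Omega=\{x,y\}$, and $U\in\mathbb Q^{\underline\Omega}$ the mould with $U^x=1$, $U^{x^pyx^q}=\frac{(-1)^q}{p!q!}$ ($p,q\in\mathbb N$), $U^{\underline\omega}=0$ otherwise. For $M\in\mathbb Q^{\underline{\mathcal N}}$ define $M\odot U\in\mathbb Q^{\underline\Omega}$ by $(M\odot U)^\emptyset=M^\emptyset$ and, for nonempty $\underline\omega$, $$(M\odot U)^{\underline\omega}=\sum_{s\ge1}\ \sum_{\substack{\underline\omega=\underline\omega^1\cdots\underline\omega^s\\ \underline\omega^1,\dots,\underline\omega^s\ne\emptyset}}M^{r(\underline\omega^1)\cdots r(\underline\omega^s)}U^{\underline\omega^1}\cdots U^{\underline\omega^s},$$ where $r(\underline\omega^1)\cdots r(\underline\omega^s)$ is read as a word of length $s$ over $\mathcal N$. Then for any unital associative algebra $\mathbb A$ over a field of characteristic zero, any $X,Y\in\mathbb A$, and any $M\in\mathbb Q^{\underline{\mathcal N}}$, $$MD=(M\odot U)B,$$ where $D$ is the associative comould generated by $D_n=\frac{t^n}{(n-1)!}\mathrm{ad}_X^{n-1}(X+Y)$ ($n\in\mathcal N$) and $B$ is the associative comould generated by $B_x=tX$, $B_y=tY$.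
   Context: For an alphabet $\mathcal M$, $\underline{\mathcal M}$ is its set of finite words (empty word $\emptyset$, length $r(\cdot)$); a mould is a function $\underline{\mathcal M}\to\mathbb Q$. For a family $(C_m)_{m\in\mathcal M}$ in $\mathbb A[[t]]$, the associative comould is $C_\emptyset=1$, $C_{m_1\cdots m_r}=C_{m_1}\cdots C_{m_r}$, and $MC=\sum_{\underline m}M^{\underline m}C_{\underline m}$ ($t$-adically convergent here). $\mathrm{ad}_AB=AB-BA$. *)

(* Defs.v *)
From HB Require Import structures.
From mathcomp Require Import all_boot all_order all_algebra.
Set Implicit Arguments. Unset Strict Implicit. Unset Printing Implicit Defensive.
Import Order.TTheory GRing.Theory Num.Theory.
Local Open Scope ring_scope.

(* ---------- formal power series A[[t]] as coefficient sequences ---------- *)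
Section Series.
Variable A : nzRingType.

Definition smul (f g : nat -> A) : nat -> A :=
  fun n => \sum_(i < n.+1) f i * g (n - i)%N.

Definition sone : nat -> A := fun n => if n is 0%N then 1 else 0.

Definition comould (T : Type) (C : T -> nat -> A) (w : seq T) : nat -> A :=
  foldr (fun m acc => smul (C m) acc) sone w.
End Series.

(* t-adically convergent mould/comould contraction:
   mc_sum_is M C S  <->  S = sum_w M^w C_w, the family (M^w C_w)_w being
   summable in the t-adic topology: for each degree N only finitely many
   words contribute to the coefficient of t^N, and that coefficient of S is
   the (finite) sum of their contributions. *)
Definition mc_sum_is (F : fieldType) (A : lalgType F) (T : eqType)
  (M : seq T -> rat) (C : T -> nat -> A) (S : nat -> A) : Prop :=
  forall N : nat, exists s : seq (seq T),
    [/\ uniq s,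
        (forall w, w \notin s -> (ratr (M w) : F) *: comould C w N = 0)
      & S N = \sum_(w <- s) (ratr (M w) : F) *: comould C w N].

Definition Npos := {n : nat | (0 < n)%N}.
Definition Npos1 : Npos := exist _ 1%N isT.

Inductive Om := Ox | Oy.
Definition Om_eqb (a b : Om) : bool :=
  match a, b with Ox, Ox | Oy, Oy => true | _, _ => false end.
Lemma Om_eqP : Equality.axiom Om_eqb.
Proof. by case; case; constructor. Qed.
HB.instance Definition _ := hasDecEq.Build Om Om_eqP.

Definition Umould (w : seq Om) : rat :=
  if w == [:: Ox] then 1 else
  let p := index Oy w in
  let q := (size w - p.+1)%N in
  if w == nseq p Ox ++ Oy :: nseq q Ox
  then (-1) ^+ q / ((p`!)%:R * (q`!)%:R)
  else 0.

(* decompositions of a word into nonempty consecutive factors w = w^1 ... w^s *)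
Fixpoint splits (T : Type) (w : seq T) : seq (seq (seq T)) :=
  match w with
  | [::] => [:: [::]]
  | a :: w' => flatten [seq (match d with
                             | [::] => [:: [:: [:: a]]]
                             | f :: d' => [:: [:: a] :: d; (a :: f) :: d']
                             end) | d <- splits w']
  end.

Definition rpos (T : Type) (u : seq T) : Npos := insubd Npos1 (size u).

Definition odot (M : seq Npos -> rat) (U : seq Om -> rat) (w : seq Om) : rat :=
  if w is [::] then M [::]
  else \sum_(d <- splits w) M (map (@rpos Om) d) * \prod_(u <- d) U u.

Definition adX (A : nzRingType) (X Z : A) : A := X * Z - Z * X.

Definition Dgen (F : fieldType) (A : lalgType F) (X Y : A) (n : Npos) : nat -> A :=
  fun k => if k == val n
           then (((val n).-1)`!%:R : F)^-1 *: iter (val n).-1 (adX X) (X + Y)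
           else 0.

Definition Bgen (A : nzRingType) (X Y : A) (o : Om) : nat -> A :=
  fun k => if k == 1%N then (match o with Ox => X | Oy => Y end) else 0.

(* Main.v *)
Require Import Defs.
From HB Require Import structures.
From mathcomp Require Import all_boot all_order all_algebra.
From mathcomp Require Import ring.
Import GRing.Theory.
Local Open Scope ring_scope.

Section RatrC.
Variable F : fieldType.
Hypothesis hF : [pchar F] =i pred0.

Lemma nz_denC (x : rat) : (denq x)%:~R != 0 :> F.
Proof.
have := denq_gt0 x; case: (denq x) => // n.
rewrite ltz_nat => n0 /=; rewrite -[_%:~R]/(n%:R : F).
by have /GRing.pcharf0P -> := hF; rewrite -lt0n.
Qed.

Lemma ratrCD (x y : rat) : ratr (x + y) = ratr x + ratr y :> F.
Proof.
have injZtoQ: @injective rat int intr by apply: intr_inj.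
have nz_den := nz_denC.
apply: (canLR (mulfK (nz_den _))); apply: (mulIf (nz_den x)).
rewrite mulrAC mulrDl divfK ?nz_den // mulrAC -!rmorphM.
apply: (mulIf (nz_den y)); rewrite mulrAC mulrDl divfK ?nz_den //.
rewrite -!(rmorphM, rmorphD); congr _%:~R; apply: injZtoQ.
rewrite !(rmorphM, rmorphD) /= [_ + _]lock /= -lock !numqE.
by rewrite (mulrAC y) -!mulrDl -mulrA mulrAC !mulrA.
Qed.

Lemma ratrCM (x y : rat) : ratr (x * y) = ratr x * ratr y :> F.
Proof.
have injZtoQ: @injective rat int intr by apply: intr_inj.
have nz_den := nz_denC.
rewrite /ratr mulrC mulrAC; apply: canLR (mulKf (nz_den _)) _; rewrite !mulrA.
do 2!apply: canRL (mulfK (nz_den _)) _; rewrite -!rmorphM; congr _%:~R.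
apply: injZtoQ; rewrite !rmorphM [x * y]lock /= !numqE -lock.
by rewrite -!mulrA mulrA mulrCA -!mulrA (mulrCA y).
Qed.

Lemma ratrC1 : ratr 1 = 1 :> F.
Proof. by rewrite /ratr divr1. Qed.
Lemma ratrC0 : ratr 0 = 0 :> F.
Proof. by rewrite /ratr mul0r. Qed.

Lemma ratrCN (x : rat) : ratr (- x) = - ratr x :> F.
Proof. by apply/eqP; rewrite -subr_eq0 opprK -ratrCD addNr ratrC0. Qed.

Lemma ratrC_sum (I : Type) (r : seq I) (f : I -> rat) :
  ratr (\sum_(i <- r) f i) = \sum_(i <- r) ratr (f i) :> F.
Proof. exact: (big_morph _ ratrCD ratrC0). Qed.

Lemma ratrC_prod (I : Type) (r : seq I) (f : I -> rat) :
  ratr (\prod_(i <- r) f i) = \prod_(i <- r) ratr (f i) :> F.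
Proof. exact: (big_morph _ ratrCM ratrC1). Qed.

Lemma ratrCX (x : rat) n : ratr (x ^+ n) = ratr x ^+ n :> F.
Proof. by elim: n => [|n IH]; rewrite ?ratrC1 // !exprS ratrCM IH. Qed.

Lemma ratrCn n : ratr n%:R = n%:R :> F.
Proof. exact: ratr_nat. Qed.

Lemma ratrCV (x : rat) : ratr (x^-1) = (ratr x)^-1 :> F.
Proof.
have [->|x0] := eqVneq x 0; first by rewrite invr0 ratrC0 invr0.
have h : ratr x * ratr x^-1 = 1 :> F by rewrite -ratrCM mulfV // ratrC1.
have nz : ratr x != 0 :> F.
  by apply/eqP => e; move: h; rewrite e mul0r => /eqP; rewrite eq_sym oner_eq0.
by rewrite -[ratr x^-1]mul1r -(mulVf nz) -mulrA h mulr1.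
Qed.
End RatrC.

Lemma uniq_flatten_map (T U : eqType) (f : T -> seq U) (g : U -> T) L :
  uniq L -> {in L, forall d, uniq (f d)} ->
  {in L, forall d x, x \in f d -> g x = d} -> uniq (flatten (map f L)).
Proof.
elim: L => [|a L IH] //= /andP[aL uL] hu hg.
have IH' : uniq (flatten (map f L)).
  apply: IH => // d dL; [apply: hu | apply: hg]; by rewrite inE dL orbT.
rewrite cat_uniq (hu a (mem_head _ _)) IH' /=.
rewrite andbT; apply/hasPn => x /flattenP [s /mapP [d dL ->]] xd.
apply/negP => xa.
have e1 := hg a (mem_head _ _) x xa.
have e2 : g x = d by apply: hg; rewrite ?inE ?dL ?orbT.
by move: aL; rewrite e1 in e2; rewrite e2 dL.
Qed.

Fixpoint Wd (n : nat) : seq (seq Om) :=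
  if n is n'.+1 then flatten [seq [seq o :: u | u <- Wd n'] | o <- [:: Ox; Oy]]
  else [:: [::]].

Lemma mem_Wd n u : (u \in Wd n) = (size u == n).
Proof.
elim: n u => [|n IH] u; first by case: u.
rewrite /= mem_cat mem_cat in_nil orbF.
have cinj : forall o : Om, injective (cons o) by move=> o x y [].
case: u => [|o u].
  by apply/negbTE; rewrite negb_or; apply/andP; split; apply/mapP => -[].
case: o.
- have h : (Ox :: u \in [seq Oy :: u0 | u0 <- Wd n]) = false.
    by apply/negbTE/mapP => -[].
  by rewrite (mem_map (cinj Ox)) IH h orbF.
- have h : (Oy :: u \in [seq Ox :: u0 | u0 <- Wd n]) = false.
    by apply/negbTE/mapP => -[].
  by rewrite (mem_map (cinj Oy)) IH h.
Qed.

Lemma uniq_Wd n : uniq (Wd n).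
Proof.
elim: n => [|n IH] //.
change (uniq (flatten [seq [seq o :: u | u <- Wd n] | o <- [:: Ox; Oy]])).
apply: (@uniq_flatten_map _ _ (fun o : Om => [seq o :: u | u <- Wd n]) (head Ox)) => //.
- by move=> o _; rewrite map_inj_uniq // => u v [].
- by move=> o _ x /mapP[u _ ->].
Qed.

Lemma mem_splits (T : eqType) (w : seq T) d :
  (d \in splits w) = (flatten d == w) && all (fun u => u != [::]) d.
Proof.
elim: w d => [|a w IH] d /=.
  rewrite inE; case: d => [|u d] //=.
  case: u => [|x u] /=; rewrite ?andbF //.
apply/flattenP/idP.
- move=> [s /mapP[d' d'S ->]] hd; move: d'S; rewrite IH => /andP[/eqP fl hne].
  case: d' fl hne hd => [|f d'] fl hne; rewrite ?inE.
  + by move=> /eqP ->; rewrite /= -fl /= eqxx.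
  + have [fn hd'] : (f != [::]) /\ all (fun u : seq T => u != [::]) d' by apply/andP.
    move=> hh; have : (d == [:: [:: a], f & d']) \/ (d == (a :: f) :: d') by apply/orP.
    by case=> /eqP ->; rewrite /= -fl /= ?eqxx ?fn ?hd'.
- case: d => [|u d] //=; case: u => [|b u] /=; first by rewrite andbF.
  move=> hh.
  have [fe hd] : (b :: u ++ flatten d == a :: w) /\ all (fun u : seq T => u != [::]) d by apply/andP.
  case/eqP: fe => -> e.
  clear hh; case: u e => [|c u] e.
  + case: d e hd => [|f d] e hd.
      exists [:: [:: [:: a]]]; last by rewrite inE.
      by apply/mapP; exists [::] => //; rewrite IH -e eqxx.
    exists [:: [:: a] :: f :: d; (a :: f) :: d]; last by rewrite inE eqxx.
    by apply/mapP; exists (f :: d) => //; rewrite IH -e eqxx.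
  + exists [:: [:: a] :: (c :: u) :: d; (a :: c :: u) :: d];
      last by rewrite !inE eqxx orbT.
    by apply/mapP; exists ((c :: u) :: d) => //; rewrite IH -e eqxx.
Qed.

Lemma uniq_splits (T : eqType) (w : seq T) : uniq (splits w).
Proof.
elim: w => [|a w IH] //=.
pose g (x : seq (seq T)) := if x is v :: rest then
   (if behead v is [::] then rest else behead v :: rest) else [::].
apply: (@uniq_flatten_map _ _ _ g) => //.
- move=> [|f d] //; rewrite mem_splits /= => /andP[_ /andP[fn _]].
  by rewrite /= inE andbT; apply/eqP => -[e]; move: fn; rewrite -e.
- move=> [|f d] //; first by move=> _ x; rewrite inE => /eqP ->.
  rewrite mem_splits /= => /andP[_ /andP[fn _]] x; rewrite !inE.
  by case/predU1P => [->|/eqP ->] //=; case: f fn.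
Qed.

Section Binom.
Variable V : zmodType.
Variables f g : V -> V.
Hypothesis fD : forall a b, f (a + b) = f a + f b.
Hypothesis gD : forall a b, g (a + b) = g a + g b.
Hypothesis f0 : f 0 = 0.
Hypothesis g0 : g 0 = 0.
Hypothesis fg : forall a, f (g a) = g (f a).

Lemma fMn a m : f (a *+ m) = f a *+ m.
Proof. by elim: m => [|m IH]; rewrite ?f0 // !mulrS fD IH. Qed.
Lemma gMn a m : g (a *+ m) = g a *+ m.
Proof. by elim: m => [|m IH]; rewrite ?g0 // !mulrS gD IH. Qed.
Lemma iter_fg m a : g (iter m f a) = iter m f (g a).
Proof. by elim: m => [|m IH] //=; rewrite -fg IH. Qed.

Lemma iter_binom n v :
  iter n (fun x => f x + g x) v =
  \sum_(i < n.+1) iter (n - i) f (iter i g v) *+ 'C(n, i).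
Proof.
elim: n => [|n IH]; first by rewrite big_ord1.
rewrite [LHS]/= IH.
rewrite (big_morph f fD f0) (big_morph g gD g0).
set d := fun i : nat => iter (n.+1 - i) f (iter i g v).
have e1 : \sum_(i < n.+1) f (iter (n - i) f (iter i g v) *+ 'C(n, i))
   = \sum_(i < n.+1) d i *+ 'C(n, i).
  apply: eq_bigr => i _; rewrite fMn /d subSn ?(valP i) //.
  by rewrite -ltnS.
have e2 : \sum_(i < n.+1) g (iter (n - i) f (iter i g v) *+ 'C(n, i))
   = \sum_(i < n.+1) d i.+1 *+ 'C(n, i).
  by apply: eq_bigr => i _; rewrite gMn iter_fg /d subSS.
rewrite e1 e2.
rewrite (big_ord_recl n.+1).
have e3 : \sum_(i < n.+1) iter (n.+1 - bump 0 i) f (iter (bump 0 i) g v) *+ 'C(n.+1, bump 0 i)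
   = \sum_(i < n.+1) d i.+1 *+ 'C(n, i) + \sum_(i < n.+1) d i.+1 *+ 'C(n, i.+1).
  rewrite -big_split; apply: eq_bigr => i _.
  by rewrite /bump /= add1n binS mulrnDr addrC.
rewrite e3 [RHS]addrCA [LHS]addrC; congr (_ + _).
rewrite (_ : \sum_(i < n.+1) d i *+ 'C(n, i) = \sum_(i < n.+2) d i *+ 'C(n, i)); last first.
  by rewrite [RHS]big_ord_recr /= bin_small // mulr0n addr0.
rewrite big_ord_recl /d !bin0; congr (_ + _).
Qed.
End Binom.

Lemma big_sub_seq (T : eqType) (V : zmodType) (r l : seq T) (h : T -> V) :
  uniq r -> uniq l -> {subset l <= r} -> {in r, forall x, x \notin l -> h x = 0} ->
  \sum_(x <- r) h x = \sum_(x <- l) h x.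
Proof.
move=> ur ul slr hz.
rewrite -(perm_big _ (introT permPl (perm_filterC (mem l) r))) big_cat /=.
rewrite [X in _ + X]big1_seq ?addr0; last first.
  by move=> x /andP[_]; rewrite mem_filter => /andP[/= xl xr]; apply: hz.
apply: perm_big; apply: uniq_perm; rewrite ?filter_uniq //.
by move=> x; rewrite mem_filter /=; case xl: (x \in l) => //; rewrite slr.
Qed.

Definition wrd p q : seq Om := nseq p Ox ++ Oy :: nseq q Ox.

Lemma index_wrd p q : index Oy (wrd p q) = p.
Proof. by rewrite /wrd index_cat mem_nseq andbF /= size_nseq addn0. Qed.

Lemma size_wrd p q : size (wrd p q) = (p + q.+1)%N.
Proof. by rewrite /wrd size_cat /= !size_nseq. Qed.

Lemma wrd_inj p q p' q' : wrd p q = wrd p' q' -> p = p' /\ q = q'.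
Proof.
move=> e; have ep : p = p' by rewrite -(index_wrd p q) e index_wrd.
split=> //.
by have := congr1 size e; rewrite !size_wrd ep => /addnI [->].
Qed.

Lemma Umould_wrd p q :
  Umould (wrd p q) = (-1) ^+ q / ((p`!)%:R * (q`!)%:R).
Proof.
rewrite /Umould.
have -> : (wrd p q == [:: Ox]) = false.
  apply/negbTE/eqP => e; have : Oy \in wrd p q by rewrite mem_cat inE eqxx orbT.
  by rewrite e.
rewrite index_wrd size_wrd addnS subSS addKn eqxx //.
Qed.

Lemma Umould_zero n u : (1 < n)%N -> size u = n ->
  (forall q, (q < n)%N -> u != wrd (n.-1 - q) q) -> Umould u = 0.
Proof.
move=> n1 su hq; rewrite /Umould.
have -> : (u == [:: Ox]) = false.
  by apply/negbTE/eqP => e; move: su n1; rewrite e => <-.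
case: eqP => // e.
set p := index Oy u in e; set q := (size u - p.+1)%N in e.
have : size u = (p + q.+1)%N by rewrite {1}e size_wrd.
rewrite su => sn.
have qn : (q < n)%N by rewrite sn addnS ltnS leq_addl.
have := hq q qn; rewrite {1}e.
have -> : (n.-1 - q)%N = p by rewrite sn addnS /= addnK.
by rewrite eqxx.
Qed.

Section Main.
Variables (F : fieldType) (hF : [pchar F] =i pred0) (A : algType F) (X Y : A).

Definition lett (o : Om) : A := if o is Ox then X else Y.
Definition Xw (u : seq Om) : A := \prod_(o <- u) lett o.

Lemma smul_conc (f g : nat -> A) a c :
  (forall k, f k = if k == a then c else 0) ->
  forall N, smul f g N = if (a <= N)%N then c * g (N - a)%N else 0.
Proof.
move=> hf N; rewrite /smul.
rewrite (eq_bigr (fun i : 'I_N.+1 => if (i : nat) == a then c * g (N - i)%N else 0));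
  last by move=> i _; rewrite hf; case: eqP => _; rewrite ?mul0r.
by rewrite -big_mkcond /= (big_ord1_eq _ (fun j => c * g (N - j)%N)) ltnS.
Qed.

Lemma comould_conc (T : Type) (C : T -> nat -> A) (deg : T -> nat) (coef : T -> A) :
  (forall m k, C m k = if k == deg m then coef m else 0) ->
  forall w N, comould C w N =
    if N == sumn (map deg w) then \prod_(m <- w) coef m else 0.
Proof.
move=> hC; elim=> [|m w IH] N /=.
  by rewrite /sone big_nil; case: N.
rewrite (smul_conc _ _ _ _ (hC m)) big_cons; case: leqP => h.
  rewrite IH -(eqn_add2l (deg m)) subnKC //.
  by case: eqP => _; rewrite ?mulr0.
rewrite ifF //; apply/negbTE; rewrite neq_ltn.
by rewrite (leq_trans h) // leq_addr.
Qed.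

Lemma comould_B u N :
  comould (Bgen X Y) u N = if N == size u then Xw u else 0.
Proof.
rewrite (@comould_conc _ _ (fun _ => 1%N) lett).
  by congr (if N == _ then _ else _); elim: u => //= o u ->.
by move=> [] k.
Qed.

Definition dcoef (n : Npos) : A :=
  (((val n).-1)`!%:R : F)^-1 *: iter (val n).-1 (adX X) (X + Y).

Lemma comould_D w N : comould (Dgen X Y) w N =
  if N == sumn (map val w) then \prod_(n <- w) dcoef n else 0.
Proof. exact: comould_conc. Qed.


Lemma adXD a b : adX X (a + b) = adX X a + adX X b.
Proof. by rewrite /adX mulrDr mulrDl opprD addrACA. Qed.
Lemma adX0 : adX X 0 = 0.
Proof. by rewrite /adX mulr0 mul0r subr0. Qed.
Lemma iter_adD k a b : iter k (adX X) (a + b) = iter k (adX X) a + iter k (adX X) b.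
Proof. by elim: k => [|k IH] //=; rewrite IH adXD. Qed.
Lemma iter_ad0 k : iter k (adX X) 0 = 0.
Proof. by elim: k => [|k IH] //=; rewrite IH adX0. Qed.
Lemma iter_adX k : iter k.+1 (adX X) X = 0.
Proof. by rewrite iterSr /adX subrr iter_ad0. Qed.

Lemma iter_mull m w : iter m (fun z => X * z) w = X ^+ m * w.
Proof. by elim: m => [|m IH] /=; rewrite ?mul1r // IH exprS mulrA. Qed.
Lemma iter_mulr m w : iter m (fun z => z * - X) w = w * (- X) ^+ m.
Proof. by elim: m => [|m IH] /=; rewrite ?mulr1 // IH exprSr mulrA. Qed.

Lemma iter_adY k : iter k (adX X) Y =
  \sum_(i < k.+1) (X ^+ (k - i) * (Y * (- X) ^+ i)) *+ 'C(k, i).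
Proof.
have -> : iter k (adX X) Y = iter k (fun z => X * z + z * - X) Y.
  by apply: eq_iter => z; rewrite /adX mulrN.
rewrite (@iter_binom A (fun z => X * z) (fun z => z * - X)).
- by apply: eq_bigr => i _; rewrite iter_mull iter_mulr.
- by move=> a b; rewrite mulrDr.
- by move=> a b; rewrite mulrDl.
- by rewrite mulr0.
- by rewrite mul0r.
- by move=> a; rewrite mulrA.
Qed.

Lemma exprNX i : (- X) ^+ i = ((-1) ^+ i : F) *: X ^+ i.
Proof.
elim: i => [|i IH]; first by rewrite !expr0 scale1r.
by rewrite !exprS IH -scalerAr -scalerA scaleN1r mulNr scalerN.
Qed.

Lemma Xw_nseq p : Xw (nseq p Ox) = X ^+ p.
Proof. by elim: p => [|p IH]; rewrite /Xw ?big_nil // big_cons -/(Xw _) IH exprS. Qed.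

Lemma Xw_wrd p q : Xw (wrd p q) = X ^+ p * (Y * X ^+ q).
Proof. by rewrite /Xw big_cat big_cons -!/(Xw _) !Xw_nseq. Qed.


Lemma natF_neq0 m : (0 < m)%N -> (m%:R : F) != 0.
Proof. by move=> m0; have /GRing.pcharf0P -> := hF; rewrite -lt0n. Qed.

Lemma letter_sum n : (0 < n)%N ->
  ((n.-1)`!%:R : F)^-1 *: iter n.-1 (adX X) (X + Y) =
  \sum_(u <- Wd n) ratr (Umould u) *: Xw u.
Proof.
case: n => [|[|k]] // _.
  have -> : Wd 1 = [:: [:: Ox]; [:: Oy]] by [].
  rewrite !big_cons big_nil addr0 /=.
  have -> : Umould [:: Ox] = 1 by rewrite /Umould eqxx.
  have -> : Umould [:: Oy] = 1.
    by have := Umould_wrd 0 0; rewrite /= => ->. 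
  by rewrite ratrC1 // invr1 !scale1r /Xw !big_cons !big_nil !mulr1.
set K := k.+1.
rewrite [_.-1]/= iter_adD iter_adX add0r iter_adY scaler_sumr.
rewrite (@big_sub_seq _ _ (Wd k.+2) [seq wrd (K - q) q | q <- iota 0 k.+2]); last first.
- move=> u; rewrite mem_Wd => /eqP su ul; apply/eqP; rewrite scaler_eq0; apply/orP; left.
  apply/eqP; rewrite (@Umould_zero k.+2) ?ratrC0 // => q qn; apply/eqP => e.
  by move/negP: ul; apply; apply/mapP; exists q; rewrite ?mem_iota.
- move=> u /mapP[q qi ->]; move: qi; rewrite mem_iota add0n => qn.
  by rewrite mem_Wd size_wrd addnS subnK // -ltnS.
- rewrite map_inj_in_uniq ?iota_uniq // => p q _ _ /wrd_inj [_ ->] //.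
- exact: uniq_Wd.
rewrite big_map.
have -> : iota 0 k.+2 = index_iota 0 k.+2 by rewrite /index_iota subn0.
rewrite big_mkord; apply: eq_bigr => i _.
rewrite Umould_wrd Xw_wrd exprNX -scaler_nat -!scalerAr !scalerA.
congr (_ *: _).
rewrite !(@ratrCM F hF) (@ratrCV F hF) (@ratrCM F hF) (@ratrCX F hF) (@ratrCN F hF) (@ratrC1 F) !(@ratrCn F).
have iK : (i <= K)%N by rewrite -ltnS.
have hb := bin_fact iK.
rewrite -hb !natrM.
have h1 : ('C(K, i)%:R : F) != 0 by apply: natF_neq0; rewrite bin_gt0.
have h2 : (i`!%:R : F) != 0 by apply: natF_neq0; rewrite fact_gt0.
have h3 : ((K - i)`!%:R : F) != 0 by apply: natF_neq0; rewrite fact_gt0.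
field.
by rewrite h1 h2 h3.
Qed.


Definition key (d : seq (seq Om)) : seq Npos := map (@rpos Om) d.
Definition EN N := flatten [seq splits w | w <- Wd N].
Definition sN N := undup (map key (EN N)).
Fixpoint Pw (w : seq Npos) : seq (seq (seq Om)) :=
  if w is n :: w' then flatten [seq [seq u :: d | d <- Pw w'] | u <- Wd (val n)]
  else [:: [::]].

Lemma mem_EN N d : (d \in EN N) =
  (size (flatten d) == N) && all (fun u => u != [::]) d.
Proof.
apply/flattenP/idP.
  move=> [s /mapP[w wW ->]]; rewrite mem_splits => /andP[/eqP fl ->].
  by rewrite fl -mem_Wd wW.
move=> /andP[sz ne]; exists (splits (flatten d)).
  by apply/mapP; exists (flatten d); rewrite ?mem_Wd.
by rewrite mem_splits eqxx.
Qed.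

Lemma uniq_EN N : uniq (EN N).
Proof.
apply: (@uniq_flatten_map _ _ (@splits Om) flatten); first exact: uniq_Wd.
  by move=> w _; apply: uniq_splits.
by move=> w _ x; rewrite mem_splits => /andP[/eqP -> _].
Qed.

Lemma mem_Pw w d : (d \in Pw w) = (map size d == map val w).
Proof.
elim: w d => [|n w IH] d /=.
  by rewrite inE; case: d.
apply/flattenP/idP.
  move=> [s /mapP[u uW ->] /mapP[d' d'P ->]] /=.
  by move: uW d'P; rewrite mem_Wd IH => /eqP -> /eqP ->.
case: d => [|u d] //= /eqP [su sd].
exists [seq u :: d0 | d0 <- Pw w].
  by apply/mapP; exists u; rewrite ?mem_Wd ?su.
by apply/mapP; exists d; rewrite ?IH ?sd.
Qed.

Lemma uniq_Pw w : uniq (Pw w).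
Proof.
elim: w => [|n w IH] //=.
apply: (@uniq_flatten_map _ _ (fun u => [seq u :: d0 | d0 <- Pw w]) (head [::])).
- exact: uniq_Wd.
- by move=> u _; rewrite map_inj_uniq // => x y [].
- by move=> u _ x /mapP[d _ ->].
Qed.

Lemma val_rpos (u : seq Om) : u != [::] -> val (rpos u) = size u.
Proof. by move=> un; rewrite /rpos val_insubd lt0n size_eq0 un. Qed.

Lemma map_val_key d : all (fun u => u != [::]) d -> map val (key d) = map size d.
Proof. by elim: d => [|u d IH] //= /andP[un ud]; rewrite val_rpos // IH. Qed.

Lemma Xw_cat u v : Xw (u ++ v) = Xw u * Xw v.
Proof. by rewrite /Xw big_cat. Qed.

Lemma sum_Pw w :
  \sum_(d <- Pw w) ratr (\prod_(u <- d) Umould u) *: Xw (flatten d) =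
  \prod_(n <- w) \sum_(u <- Wd (val n)) ratr (Umould u) *: Xw u.
Proof.
elim: w => [|n w IH].
  by rewrite /= big_cons !big_nil addr0 (@ratrC1 F) scale1r /Xw big_nil.
rewrite big_cons -IH /= big_flatten big_map mulr_suml.
apply: eq_bigr => u _; rewrite big_map mulr_sumr; apply: eq_bigr => d _.
rewrite big_cons (@ratrCM F hF) Xw_cat -scalerAl -scalerAr scalerA.
by congr (_ *: _); rewrite mulrC.
Qed.

Variable M : seq Npos -> rat.

Lemma odot_splits w : odot M Umould w =
  \sum_(d <- splits w) M (key d) * \prod_(u <- d) Umould u.
Proof.
case: w => [|a w] //=.
by rewrite big_cons !big_nil mulr1 addr0.
Qed.

Definition SS N : A := \sum_(w <- Wd N) ratr (odot M Umould w) *: Xw w.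

Lemma partition_keys (s : seq (seq Npos)) (r : seq (seq (seq Om))) (G : seq (seq Om) -> A) :
  uniq s -> {in r, forall d, key d \in s} ->
  \sum_(w <- s) \sum_(d <- r | key d == w) G d = \sum_(d <- r) G d.
Proof.
move=> us ks.
rewrite (eq_bigr (fun w => \sum_(d <- r) if key d == w then G d else 0));
  last by move=> w _; rewrite big_mkcond.
rewrite exchange_big /=; apply: eq_big_seq => d dr.
rewrite -big_mkcond (big_rem (key d)) ?ks //= eqxx big1_seq ?addr0 //.
move=> w /andP[/eqP kw]; rewrite mem_rem_uniq // inE kw eqxx //.
Qed.

End Main.

Theorem theorem5p1 (F : fieldType) (hF : [pchar F] =i pred0)
  (A : algType F) (X Y : A) (M : seq Npos -> rat) :
  exists S : nat -> A,
    mc_sum_is M (Dgen X Y) S /\ mc_sum_is (odot M Umould) (Bgen X Y) S.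
Proof.
exists (@SS F A X Y M); split; last first.
  move=> N; exists (Wd N); split; first exact: uniq_Wd.
    by move=> w; rewrite mem_Wd comould_B eq_sym => /negbTE ->; rewrite scaler0.
  by apply: eq_big_seq => w; rewrite mem_Wd comould_B eq_sym => ->.
move=> N; exists (sN N); split; first exact: undup_uniq.
  move=> w wn; rewrite comould_D; case: eqP => e; last by rewrite scaler0.
  exfalso; move/negP: wn; apply; rewrite mem_undup; apply/mapP.
  set d := map (fun n : Npos => nseq (val n) Ox) w.
  have ne : all (fun u => u != [::]) d.
    apply/allP => u /mapP[n _ ->]; rewrite -size_eq0 size_nseq -lt0n.
    exact: (valP n).
  exists d.
    rewrite mem_EN ne andbT size_flatten /shape -map_comp e; apply/eqP.
    by congr sumn; apply: eq_map => n /=; rewrite size_nseq.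
  apply: (inj_map val_inj); rewrite map_val_key // -map_comp.
  by apply: eq_map => n /=; rewrite size_nseq.
rewrite /SS.
transitivity (\sum_(d <- EN N) ratr (M (key d)) *:
                 (ratr (\prod_(u <- d) Umould u) *: @Xw F A X Y (flatten d))).
  rewrite /EN big_flatten big_map; apply: eq_bigr => w _.
  rewrite odot_splits (@ratrC_sum F hF) scaler_suml; apply: eq_big_seq => d.
  by rewrite mem_splits => /andP[/eqP fl _]; rewrite fl (@ratrCM F hF) scalerA.
rewrite -(@partition_keys F A (sN N)); last first.
- by move=> d dE; rewrite mem_undup map_f.
- exact: undup_uniq.
apply: eq_big_seq => w wS.
rewrite (eq_bigr (fun d => ratr (M w) *: (ratr (\prod_(u <- d) Umould u) *: @Xw F A X Y (flatten d))));
  last by move=> d /eqP ->.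
rewrite -scaler_sumr; congr (_ *: _).
move: wS; rewrite mem_undup => /mapP[d0 d0E ew].
have ne0 : all (fun u => u != [::]) d0 by move: d0E; rewrite mem_EN => /andP[].
have eN : N = sumn (map val w).
  move: d0E; rewrite mem_EN => /andP[/eqP <- _].
  by rewrite ew map_val_key // size_flatten.
rewrite comould_D eN eqxx -[in LHS]big_filter.
rewrite (perm_big (Pw w)); last first.
  apply: uniq_perm; rewrite ?filter_uniq ?uniq_EN ?uniq_Pw // => d.
  rewrite mem_filter mem_Pw mem_EN.
  apply/idP/idP.
    move=> h; case/andP: h => /eqP kw h; case/andP: h => _ ned.
    by rewrite -kw map_val_key.
  move=> /eqP sd.
  have ned : all (fun u => u != [::]) d.
    apply/allP => u ud; rewrite -size_eq0 -lt0n.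
    have : size u \in map size d by apply: map_f.
    by rewrite sd => /mapP[n _ ->]; apply: (valP n).
  rewrite ned andbT size_flatten /shape sd -eN eqxx andbT.
  by rewrite -(inj_eq (inj_map val_inj)) map_val_key // sd.
rewrite sum_Pw //; apply: eq_bigr => n _.
by rewrite /dcoef letter_sum //; apply: (valP n).
Qed.
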